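(* In any quantum resource theory, for every state $\rho_A$ and every channel $\mathcal{M}_{A\to B}$, $$D_{\max}^{\mathfrak{F}}(\mathcal{M}_{A\to B}(\rho_A))\le D_{\max}^{\mathfrak{F}}(\rho_A)+D_{\max}^{\mathfrak{F}}(\mathcal{M}_{A\to B}).$$
   Context: A quantum resource theory specifies sets $\mathfrak{F}(A)$ of free states and $\mathfrak{F}(A\to B)$ of free channels such that applying a free channel to a free state yields a free state. The max-relative entropy of states is $D_{\max}(\rho\Vert\sigma)=\log\min\{\lambda:\rho\le\lambda\sigma\}$ if $\operatorname{supp}\rho\subseteq\operatorname{supp}\sigma$ and $+\infty$ otherwise. For channels, $D_{\max}(\mathcal{M}_{A\to B}\Vert\mathcal{N}_{A\to B})=\sup_{\rho_{RA}}D_{\max}((\mathcal{I}_R\otimes\mathcal{M}_{A\to B})(\rho_{RA})\Vert(\mathcal{I}_R\otimes\mathcal{N}_{A\to B})(\rho_{RA}))$, the supremum over all reference systems $R$ and states $\rho_{RA}$. The resource measures are $D_{\max}^{\mathfrak{F}}(\rho_A)=\inf_{\omega_A\in\mathfrak{F}(A)}D_{\max}(\rho_A\Vert\omega_A)$ and $D_{\max}^{\mathfrak{F}}(\mathcal{M}_{A\to B})=\inf_{\mathcal{N}_{A\to B}\in\mathfrak{F}(A\to B)}D_{\max}(\mathcal{M}_{A\to B}\Vert\mathcal{N}_{A\to B})$. *)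

(* Defs.v *)
From HB Require Import structures.
From mathcomp Require Import all_boot all_order all_algebra.
From mathcomp Require Import complex mxtens.
From mathcomp Require Import all_classical all_reals.
From mathcomp Require Import ereal exp.

Set Implicit Arguments.
Unset Strict Implicit.
Unset Printing Implicit Defensive.

Import Order.TTheory GRing.Theory Num.Theory.
Local Open Scope ring_scope.
Local Open Scope classical_set_scope.

Section QRT.
Variable R : realType.
Local Notation C := (R[i]).

Definition rc (x : R) : C := Complex x 0.

Definition adjmx m n (A : 'M[C]_(m, n)) : 'M[C]_(n, m) := (map_mx Num.conj A)^T.

Definition hermitian n (A : 'M[C]_n) : Prop := adjmx A = A.

Definition psd n (A : 'M[C]_n) : Prop :=
  hermitian A /\ forall v : 'cV[C]_n, 0 <= (adjmx v *m A *m v) 0 0.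

Definition loewner n (X Y : 'M[C]_n) : Prop := psd (Y - X).

Definition is_state n (rho : 'M[C]_n) : Prop := psd rho /\ \tr rho = 1.

(* (id_r \otimes M) acting on operators on C^r \otimes C^a *)
Definition ampliate r a b (M : 'M[C]_a -> 'M[C]_b) (X : 'M[C]_(r * a))
  : 'M[C]_(r * b) :=
  \matrix_(p, q)
    (M (\matrix_(s, t) X (mxtens_index ((mxtens_unindex p).1, s))
                         (mxtens_index ((mxtens_unindex q).1, t))))
      (mxtens_unindex p).2 (mxtens_unindex q).2.

Arguments ampliate r {a b} M X.

Definition is_channel a b (M : 'M[C]_a -> 'M[C]_b) : Prop :=
  [/\ linear M,
      (forall r (X : 'M[C]_(r * a)), psd X -> psd (ampliate r M X))
    & forall X, \tr (M X) = \tr X].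

Definition log2 (x : R) : R := ln x / ln 2.

(* support of a hermitian operator = its (row = column) space *)
Definition supp_sub n (rho sigma : 'M[C]_n) : Prop := (rho <= sigma)%MS.

Definition Dmax n (rho sigma : 'M[C]_n) : \bar R :=
  if `[< supp_sub rho sigma >] then
    (log2 (inf [set lam : R | loewner rho (rc lam *: sigma)]))%:E
  else +oo%E.

Definition Dmax_chan a b (M N : 'M[C]_a -> 'M[C]_b) : \bar R :=
  ereal_sup [set x : \bar R | exists (r : nat) (rho : 'M[C]_(r * a)),
               is_state rho /\ x = Dmax (ampliate r M rho) (ampliate r N rho)].

Unset Implicit Arguments.
Record resource_theory := {
  sys : Type;
  sdim : sys -> nat;
  free_state : forall A : sys, set 'M[C]_(sdim A);
  free_channel : forall A B : sys, set ('M[C]_(sdim A) -> 'M[C]_(sdim B));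
  free_state_is_state : forall (A : sys) (omega : 'M[C]_(sdim A)), free_state A omega -> is_state omega;
  free_channel_is_channel :
    forall (A B : sys) (N : 'M[C]_(sdim A) -> 'M[C]_(sdim B)), free_channel A B N -> is_channel N;
  free_closed : forall (A B : sys) (N : 'M[C]_(sdim A) -> 'M[C]_(sdim B))
      (omega : 'M[C]_(sdim A)),
      free_channel A B N -> free_state A omega -> free_state B (N omega) }.
Set Implicit Arguments.

Definition DmaxF_state (T : resource_theory) (A : sys T)
    (rho : 'M[C]_(sdim T A)) : \bar R :=
  ereal_inf [set Dmax rho omega | omega in free_state T A].

Definition DmaxF_chan (T : resource_theory) (A B : sys T)
    (M : 'M[C]_(sdim T A) -> 'M[C]_(sdim T B)) : \bar R :=
  ereal_inf [set Dmax_chan M N | N in free_channel T A B].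

End QRT.

Arguments sys {R}.
Arguments sdim {R} r _.
Arguments free_state {R} r A.
Arguments free_channel {R} r A B.

(* Main.v *)
Require Import Defs.
From HB Require Import structures.
From mathcomp Require Import all_boot all_order all_algebra.
From mathcomp Require Import complex mxtens.
From mathcomp Require Import all_classical all_reals.
From mathcomp Require Import ereal exp.
From mathcomp Require Import ring lra.
Set Implicit Arguments.
Unset Strict Implicit.
Unset Printing Implicit Defensive.
Import Order.TTheory GRing.Theory Num.Theory.
Local Open Scope ring_scope.
Section S.
Variable R : realType.
Local Notation C := (R[i]).
Lemma adjmxM m n p (A : 'M[C]_(m,n)) (B : 'M[C]_(n,p)) : adjmx (A *m B) = adjmx B *m adjmx A.
Proof. by rewrite /adjmx map_mxM trmx_mul. Qed.
Lemma adjmxK m n (A : 'M[C]_(m,n)) : adjmx (adjmx A) = A.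
Proof. by apply/matrixP=> i j; rewrite /adjmx !mxE conjCK. Qed.
Lemma adjmxE m n (A : 'M[C]_(m,n)) i j : adjmx A i j = Num.conj (A j i).
Proof. by rewrite /adjmx !mxE. Qed.
Lemma adjmxD m n (A B : 'M[C]_(m,n)) : adjmx (A + B) = adjmx A + adjmx B.
Proof. by apply/matrixP=> i j; rewrite !(adjmxE, mxE) rmorphD. Qed.
Lemma adjmxN m n (A : 'M[C]_(m,n)) : adjmx (- A) = - adjmx A.
Proof. by apply/matrixP=> i j; rewrite !(adjmxE, mxE) rmorphN. Qed.
Lemma adjmxB m n (A B : 'M[C]_(m,n)) : adjmx (A - B) = adjmx A - adjmx B.
Proof. by rewrite adjmxD adjmxN. Qed.
Lemma adjmxZ m n a (A : 'M[C]_(m,n)) : adjmx (a *: A) = Num.conj a *: adjmx A.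
Proof. by apply/matrixP=> i j; rewrite !(adjmxE, mxE) rmorphM. Qed.
Lemma adjmx1 n : adjmx (1%:M : 'M[C]_n) = 1%:M.
Proof. by apply/matrixP=> i j; rewrite !(adjmxE, mxE) eq_sym rmorph_nat. Qed.
Lemma conj_rc (x : R) : Num.conj (rc x) = rc x.
Proof. by rewrite /rc /=; congr Complex; rewrite oppr0. Qed.

Definition qf n (X : 'M[C]_n) (v : 'cV[C]_n) : C := (adjmx v *m X *m v) 0 0.
Definition bf n (X : 'M[C]_n) (u v : 'cV[C]_n) : C := (adjmx u *m X *m v) 0 0.

Lemma qfD n (X Y : 'M[C]_n) v : qf (X + Y) v = qf X v + qf Y v.
Proof. by rewrite /qf mulmxDr mulmxDl mxE. Qed.
Lemma qfN n (X : 'M[C]_n) v : qf (- X) v = - qf X v.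
Proof. by rewrite /qf mulmxN mulNmx mxE. Qed.
Lemma qfB n (X Y : 'M[C]_n) v : qf (X - Y) v = qf X v - qf Y v.
Proof. by rewrite qfD qfN. Qed.
Lemma qfZ n a (X : 'M[C]_n) v : qf (a *: X) v = a * qf X v.
Proof. by rewrite /qf -scalemxAr -scalemxAl mxE. Qed.
Lemma qf_cong n m (B : 'M[C]_(n, m)) (X : 'M[C]_n) v :
  qf (adjmx B *m X *m B) v = qf X (B *m v).
Proof. by rewrite /qf adjmxM !mulmxA. Qed.
Lemma bf_conj n (X : 'M[C]_n) (u v : 'cV[C]_n) : Defs.hermitian X -> Num.conj (bf X u v) = bf X v u.
Proof.
move=> hX; rewrite /bf -adjmxE !adjmxM adjmxK hX mulmxA //.
Qed.
Lemma qf_conj n (X : 'M[C]_n) (v : 'cV[C]_n) : Defs.hermitian X -> Num.conj (qf X v) = qf X v.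
Proof. exact: bf_conj. Qed.

Lemma hermitianD n (X Y : 'M[C]_n) : Defs.hermitian X -> Defs.hermitian Y -> Defs.hermitian (X + Y).
Proof. by rewrite /Defs.hermitian adjmxD => -> ->. Qed.
Lemma hermitianN n (X : 'M[C]_n) : Defs.hermitian X -> Defs.hermitian (- X).
Proof. by rewrite /Defs.hermitian adjmxN => ->. Qed.
Lemma hermitianB n (X Y : 'M[C]_n) : Defs.hermitian X -> Defs.hermitian Y -> Defs.hermitian (X - Y).
Proof. by move=> hX hY; apply: hermitianD => //; apply: hermitianN. Qed.
Lemma hermitianZ n (x : R) (X : 'M[C]_n) : Defs.hermitian X -> Defs.hermitian (rc x *: X).
Proof. by rewrite /Defs.hermitian adjmxZ conj_rc => ->. Qed.
Lemma hermitian_cong n m (B : 'M[C]_(n, m)) (X : 'M[C]_n) :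
  Defs.hermitian X -> Defs.hermitian (adjmx B *m X *m B).
Proof. by rewrite /Defs.hermitian !adjmxM adjmxK mulmxA => ->. Qed.

Lemma psd_cong n m (B : 'M[C]_(n, m)) (X : 'M[C]_n) : psd X -> psd (adjmx B *m X *m B).
Proof.
case=> hX pX; split; first exact: hermitian_cong.
by move=> v; have := pX (B *m v); rewrite -/(qf _ _) -qf_cong.
Qed.
Lemma psdD n (X Y : 'M[C]_n) : psd X -> psd Y -> psd (X + Y).
Proof.
case=> hX pX [hY pY]; split; first exact: hermitianD.
move=> v; rewrite -/(qf _ _) qfD; exact: addr_ge0 (pX v) (pY v).
Qed.
Lemma loewnerP n (X Y : 'M[C]_n) : Defs.hermitian X -> Defs.hermitian Y ->
  (forall v, qf X v <= qf Y v) -> loewner X Y.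
Proof.
move=> hX hY H; split; first exact: hermitianB.
by move=> v; rewrite -/(qf _ _) qfB subr_ge0.
Qed.
Lemma loewner_qf n (X Y : 'M[C]_n) v : loewner X Y -> qf X v <= qf Y v.
Proof. by case=> _ /(_ v); rewrite -/(qf _ _) qfB subr_ge0. Qed.
Lemma psd_qf n (X : 'M[C]_n) v : psd X -> 0 <= qf X v.
Proof. by case=> _ /(_ v). Qed.
Lemma psd_herm n (X : 'M[C]_n) : psd X -> Defs.hermitian X.
Proof. by case. Qed.
Lemma loewner_hermB n (X Y : 'M[C]_n) : loewner X Y -> Defs.hermitian (Y - X).
Proof. by case. Qed.
End S.
Section S2.
Variable R : realType.
Local Notation C := (R[i]).

Lemma addmx00 (A B : 'M[C]_1) : (A + B) 0 0 = A 0 0 + B 0 0.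
Proof. by rewrite mxE. Qed.
Lemma scalemx00 a (A : 'M[C]_1) : (a *: A) 0 0 = a * A 0 0.
Proof. by rewrite mxE. Qed.

Lemma qf_expand n (X : 'M[C]_n) u v z :
  qf X (u + z *: v) = qf X u + z * bf X u v + Num.conj z * bf X v u
                      + Num.conj z * z * qf X v.
Proof.
rewrite /qf /bf adjmxD adjmxZ !mulmxDl !mulmxDr.
rewrite -!scalemxAl -!scalemxAr ?scalerA !(addmx00, scalemx00).
ring.
Qed.

Lemma real_ge0 (x : C) : 0 <= x -> Num.conj x = x.
Proof. by move=> h; apply: conj_Creal; apply: ger0_real. Qed.

Lemma CS n (X : 'M[C]_n) u v : psd X ->
  `|bf X u v| ^+ 2 <= qf X u * qf X v.
Proof.
move=> pX; have hX := psd_herm pX.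
set a := qf X u; set c := qf X v; set b := bf X u v.
have hb : bf X v u = Num.conj b by rewrite /b bf_conj.
have a0 : 0 <= a by apply: psd_qf.
have c0 : 0 <= c by apply: psd_qf.
have N0 : 0 <= `|b| ^+ 2 by apply: exprn_ge0.
have key : forall t, Num.conj t = t -> 0 <= a - 2 * t * `|b| ^+ 2 + t ^+ 2 * `|b| ^+ 2 * c.
  move=> t ht; have := psd_qf (u + (- (t * Num.conj b)) *: v) pX.
  have cj : Num.conj (- (t * Num.conj b)) = - (t * b).
    by rewrite rmorphN rmorphM /= ht conjCK.
  rewrite qf_expand -/a -/c -/b hb normCK cj.
  suff -> : a + - (t * Num.conj b) * b + - (t * b) * Num.conj b +
      - (t * b) * - (t * Num.conj b) * c = a - 2 * t * (b * Num.conj b) + t ^+ 2 * (b * Num.conj b) * c by [].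
  ring.
have [c00|cpos] : c = 0 \/ 0 < c.
  by move: c0; rewrite le0r => /orP[/eqP->|->]; [left|right].
  rewrite c00 mulr0; set N := `|b| ^+ 2 in N0 key *.
  move: N0; rewrite le0r => /orP[/eqP->//|Npos].
  have := key ((a + 1) / (2 * N)).
  have rt : ((a + 1) / (2 * N)) \is Num.real.
    by apply: ger0_real; rewrite divr_ge0 ?addr_ge0 ?mulr_ge0 ?(ltW Npos).
  move=> /(_ (conj_Creal rt)); rewrite c00 mulr0 addr0.
  have -> : 2 * ((a + 1) / (2 * N)) * N = a + 1.
    by field; rewrite lt0r_neq0.
  by rewrite opprD addrA subrr sub0r oppr_ge0 => /(lt_le_trans ltr01); rewrite ltxx.
have := key c^-1; have rt : c^-1 \is Num.real by rewrite rpredV ger0_real.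
move=> /(_ (conj_Creal rt)).
have -> : a - 2 * c^-1 * `|b| ^+ 2 + c^-1 ^+ 2 * `|b| ^+ 2 * c = a - `|b| ^+ 2 / c.
  by field; rewrite lt0r_neq0.
by rewrite subr_ge0 ler_pdivrMr // mulrC.
Qed.
End S2.
Section S3.
Variable R : realType.
Local Notation C := (R[i]).

Lemma qf1E n (w : 'cV[C]_n) : qf 1%:M w = \sum_i `|w i 0| ^+ 2.
Proof.
rewrite /qf mulmx1 mxE; apply: eq_bigr => i _.
by rewrite adjmxE normCK mulrC.
Qed.

Lemma qf1_ge0 n (w : 'cV[C]_n) : 0 <= qf 1%:M w.
Proof. by rewrite qf1E sumr_ge0 // => i _; rewrite exprn_ge0. Qed.

Lemma qf1_eq0 n (w : 'cV[C]_n) : qf 1%:M w = 0 -> w = 0.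
Proof.
rewrite qf1E => /psumr_eq0P H; apply/matrixP => i j.
rewrite (ord1 j) mxE; have /eqP := H (fun i _ => exprn_ge0 _ (normr_ge0 (w i 0))) i isT.
- by rewrite expf_eq0 /= normr_eq0 => /eqP.
Qed.
End S3.
Section S4.
Variable R : realType.
Local Notation C := (R[i]).

Lemma psd_ker n (X : 'M[C]_n) v : psd X -> qf X v = 0 -> X *m v = 0.
Proof.
move=> pX q0; apply: qf1_eq0.
have := CS (X *m v) v pX; rewrite q0 mulr0.
have -> : bf X (X *m v) v = qf 1%:M (X *m v) by rewrite /bf /qf mulmx1 mulmxA.
move=> h; have : `|qf 1%:M (X *m v)| ^+ 2 == 0 by rewrite eq_le h exprn_ge0.
by rewrite expf_eq0 /= normr_eq0 => /eqP.
Qed.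

Lemma col_mul m n p (A : 'M[C]_(m, n)) (B : 'M[C]_(n, p)) j :
  col j (A *m B) = A *m col j B.
Proof. by apply/matrixP => i k; rewrite !mxE; apply: eq_bigr => l _; rewrite !mxE. Qed.

Lemma loewner_supp n (X Y : 'M[C]_n) : psd X -> loewner X Y -> (X <= Y)%MS.
Proof.
move=> pX lXY; rewrite submxE; apply/eqP/matrixP => i j.
have hY : Y *m col j (cokermx Y) = 0 by rewrite -col_mul mulmx_coker; apply/matrixP=> ? ?; rewrite !mxE.
have qY : qf Y (col j (cokermx Y)) = 0 by rewrite /qf -mulmxA hY mulmx0 mxE.
have qX : qf X (col j (cokermx Y)) = 0.
  apply/eqP; rewrite eq_le psd_qf // andbT -qY; exact: loewner_qf.
have := psd_ker pX qX; rewrite -col_mul => /matrixP/(_ i 0).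
by rewrite !mxE.
Qed.
End S4.
Section S5.
Variable R : realType.
Local Notation C := (R[i]).

Lemma amgm (x y : C) : 0 <= x -> 0 <= y -> x * y <= x ^+ 2 + y ^+ 2.
Proof.
move=> x0 y0; rewrite -subr_ge0.
have -> : x ^+ 2 + y ^+ 2 - x * y = (x - y) ^+ 2 + x * y by ring.
rewrite addr_ge0 ?(mulr_ge0 x0 y0) // -real_normK ?exprn_ge0 //.
by rewrite rpredB // ger0_real.
Qed.

Lemma term_le_qf1 n (v : 'cV[C]_n) i : `|v i 0| ^+ 2 <= qf 1%:M v.
Proof.
rewrite qf1E (bigD1 i) //= lerDl sumr_ge0 // => j _; exact: exprn_ge0.
Qed.

Lemma qf_bound n (H : 'M[C]_n) : exists2 c : C, 0 <= c &
  forall v, `|qf H v| <= c * qf 1%:M v.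
Proof.
exists (2 * \sum_i \sum_j `|H i j|).
  by rewrite mulr_ge0 ?ler0n // sumr_ge0 // => i _; rewrite sumr_ge0.
move=> v; set s := qf 1%:M v.
have -> : qf H v = \sum_i \sum_j Num.conj (v i 0) * H i j * v j 0.
  rewrite /qf mxE; under eq_bigr => j _ do rewrite mxE big_distrl /=.
  rewrite exchange_big /=; apply: eq_bigr => i _; apply: eq_bigr => j _.
  by rewrite adjmxE.
apply: (le_trans (ler_norm_sum _ _ _)).
set X := \sum_i _.
have -> : 2 * X * s = X * (s + s) by ring.
rewrite /X mulr_suml; apply: ler_sum => i _.
apply: (le_trans (ler_norm_sum _ _ _)).
rewrite mulr_suml; apply: ler_sum => j _.
rewrite !normrM norm_conjC.
have -> : `|v i 0| * `|H i j| * `|v j 0| = `|H i j| * (`|v i 0| * `|v j 0|) by ring.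
rewrite ler_wpM2l //.
apply: (le_trans (amgm (normr_ge0 _) (normr_ge0 _))).
by rewrite lerD // term_le_qf1.
Qed.
End S5.
Section S6.
Variable R : realType.
Local Notation C := (R[i]).

Lemma posdef_lb k (K : 'M[C]_k) : psd K -> K \in unitmx ->
  exists2 t : C, 0 <= t & forall v, qf 1%:M v <= t * qf K v.
Proof.
move=> pK uK; have [c c0 hc] := qf_bound (adjmx (invmx K)).
exists c => // v; set s := qf 1%:M v.
set w := invmx K *m v.
have e1 : bf K v w = s by rewrite /bf /w /s mulmxA -(mulmxA _ K) mulmxV // mulmx1.
have e2 : qf K w = qf (adjmx (invmx K)) v.
  by rewrite /qf /w adjmxM -!mulmxA mulKVmx.
have := CS v w pK; rewrite e1 e2.
have s0 : 0 <= s by apply: qf1_ge0.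
have qw0 : 0 <= qf (adjmx (invmx K)) v by rewrite -e2 psd_qf.
have qK0 : 0 <= qf K v by apply: psd_qf.
rewrite ger0_norm // => h.
have h2 : s ^+ 2 <= qf K v * (c * s).
  apply: (le_trans h); rewrite ler_wpM2l //.
  by rewrite -[X in X <= _]ger0_norm.
move: s0; rewrite le0r => /orP[/eqP->|spos]; first by rewrite mulr_ge0.
rewrite -(ler_pM2r spos); move: h2; rewrite expr2.
suff -> : qf K v * (c * s) = c * qf K v * s by [].
by rewrite mulrA [qf K v * c]mulrC.
Qed.
End S6.
Section S7.
Variable R : realType.
Local Notation C := (R[i]).

Lemma rcRe (z : C) : 0 <= z -> rc (complex.Re z) = z.
Proof. by case: z => a b /ger0_Im /= ->. Qed.


Lemma dominate n (rho om : 'M[C]_n) : psd rho -> psd om -> (rho <= om)%MS ->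
  exists lam : R, loewner rho (rc lam *: om).
Proof.
move=> prho pom srho.
set W := row_base om.
have /row_freeP [Wr hW] := row_base_free om.
have dec : forall Z : 'M[C]_n, Defs.hermitian Z -> (Z <= W)%MS ->
    Z = adjmx W *m (adjmx Wr *m Z *m Wr) *m W.
  move=> Z hZ sZ.
  have e1 : Z *m Wr *m W = Z.
    by rewrite -{1}(mulmxKpV sZ) -(mulmxA _ W Wr) hW mulmx1 mulmxKpV.
  symmetry; rewrite !mulmxA -adjmxM -!mulmxA [Z *m _]mulmxA e1.
  by rewrite -{1}hZ -adjmxM mulmxA e1 hZ.
have somW : (om <= W)%MS by rewrite eq_row_base.
have srW : (rho <= W)%MS by apply: submx_trans somW.
set K := adjmx Wr *m om *m Wr.
set Kr := adjmx Wr *m rho *m Wr.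
have pK : psd K by apply: psd_cong.
have pKr : psd Kr by apply: psd_cong.
have eom := dec om (psd_herm pom) somW.
have erho := dec rho (psd_herm prho) srW.
have uK : K \in unitmx.
  rewrite -row_free_unit /row_free eqn_leq rank_leq_row /=.
  apply: (leq_trans _ (mxrankM_maxr (adjmx W) K)).
  rewrite {1}eom; exact: mxrankM_maxl.
have [t t0 ht] := posdef_lb pK uK.
have [c c0 hc] := qf_bound Kr.
exists (complex.Re (c * t)).
apply: loewnerP (psd_herm prho) (hermitianZ _ (psd_herm pom)) _ => v.
rewrite qfZ rcRe ?mulr_ge0 //.
have -> : qf rho v = qf Kr (W *m v) by rewrite {1}erho qf_cong.
have -> : qf om v = qf K (W *m v) by rewrite {1}eom qf_cong.
set u := W *m v.
apply: (le_trans (real_ler_norm (ger0_real (psd_qf u pKr)))).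
apply: (le_trans (hc u)); rewrite -mulrA ler_wpM2l //.
Qed.
End S7.
Section S8.
Variable R : realType.
Local Notation C := (R[i]).

Lemma sum_unindex a (F : 'I_a -> C) :
  \sum_(p < 1 * a) F (mxtens_unindex p).2 = \sum_j F j.
Proof.
rewrite (reindex (fun j : 'I_a => mxtens_index (ord0 : 'I_1, j))).
  by apply: eq_bigr => j _; rewrite mxtens_indexK.
exists (fun p => (mxtens_unindex p).2) => p _; first by rewrite mxtens_indexK.
apply: (can_inj (@mxtens_unindexK 1 a)); rewrite mxtens_indexK.
by case: (mxtens_unindex p) => i j /=; rewrite (ord1 i).
Qed.

Lemma sum_delta n (i : 'I_n) (F : 'I_n -> C) : \sum_k (k == i)%:R * F k = F i.
Proof.
rewrite (bigD1 i) //= eqxx mul1r big1 ?addr0 // => k /negbTE ->; by rewrite mul0r.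
Qed.

Definition Pm a : 'M[C]_(1 * a, a) := \matrix_(p, j) ((j == (mxtens_unindex p).2)%:R).
Definition lift a (X : 'M[C]_a) : 'M[C]_(1 * a) := Pm a *m X *m adjmx (Pm a).

Lemma liftE a (X : 'M[C]_a) p q : lift X p q = X (mxtens_unindex p).2 (mxtens_unindex q).2.
Proof.
rewrite /lift mxE; under eq_bigr => l _ do rewrite mxE adjmxE mxE rmorph_nat.
rewrite -(sum_delta (mxtens_unindex q).2); apply: eq_bigr => l _.
rewrite mulrC; congr (_ * _).
under eq_bigr => k _ do rewrite mxE.
by rewrite sum_delta.
Qed.

Lemma PmK a : adjmx (Pm a) *m Pm a = 1%:M.
Proof.
apply/matrixP => i j; rewrite !mxE.
under eq_bigr => p _ do rewrite adjmxE !mxE rmorph_nat.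
rewrite (sum_unindex (fun k => (i == k)%:R * (j == k)%:R)).
under eq_bigr => k _ do rewrite [(i == k)]eq_sym.
by rewrite sum_delta eq_sym.
Qed.

Lemma unlift a (X : 'M[C]_a) : adjmx (Pm a) *m lift X *m Pm a = X.
Proof. by rewrite /lift !mulmxA PmK mul1mx -mulmxA PmK mulmx1. Qed.

Lemma psd_lift a (X : 'M[C]_a) : psd X -> psd (lift X).
Proof. by move=> pX; rewrite /lift -{1}(adjmxK (Pm a)); apply: psd_cong. Qed.

Lemma psd_unlift a (X : 'M[C]_a) : psd (lift X) -> psd X.
Proof. by move=> pX; rewrite -(unlift X); apply: psd_cong. Qed.

Lemma liftB a (X Y : 'M[C]_a) : lift (X - Y) = lift X - lift Y.
Proof. by rewrite /lift mulmxBr mulmxBl. Qed.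
Lemma liftZ a c (X : 'M[C]_a) : lift (c *: X) = c *: lift X.
Proof. by rewrite /lift -scalemxAr -scalemxAl. Qed.

Lemma loewner_unlift a (X Y : 'M[C]_a) c :
  loewner (lift X) (rc c *: lift Y) -> loewner X (rc c *: Y).
Proof. by rewrite /loewner -liftZ -liftB; apply: psd_unlift. Qed.

Lemma tr_lift a (X : 'M[C]_a) : \tr (lift X) = \tr X.
Proof.
rewrite /mxtrace; under eq_bigr => p _ do rewrite liftE.
exact: (sum_unindex (fun k => X k k)).
Qed.

Lemma state_lift a (X : 'M[C]_a) : is_state X -> is_state (lift X).
Proof. by case=> pX tX; split; [apply: psd_lift | rewrite tr_lift]. Qed.

Lemma ampliate_lift a b (M : 'M[C]_a -> 'M[C]_b) (X : 'M[C]_a) :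
  @ampliate R 1 a b M (lift X) = lift (M X).
Proof.
apply/matrixP => p q; rewrite liftE mxE.
congr (M _ _ _); apply/matrixP => s t; rewrite mxE liftE !mxtens_indexK //.
Qed.
End S8.
Section S9.
Variable R : realType.
Local Notation C := (R[i]).

Lemma qfE n (X : 'M[C]_n) v : qf X v = \sum_i \sum_j Num.conj (v i 0) * X i j * v j 0.
Proof.
rewrite /qf mxE; under eq_bigr => j _ do rewrite mxE big_distrl /=.
rewrite exchange_big /=; apply: eq_bigr => i _; apply: eq_bigr => j _.
by rewrite adjmxE.
Qed.

Lemma qf_delta n (X : 'M[C]_n) i : qf X (delta_mx i 0) = X i i.
Proof.
rewrite qfE.
under eq_bigr => k _ do under eq_bigr => l _ do rewrite !mxE !eqxx !andbT rmorph_nat.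
rewrite -(sum_delta i (fun k => X k i)); apply: eq_bigr => k _.
rewrite -(sum_delta i (fun l => X k l)) mulr_sumr; apply: eq_bigr => l _.
by case: (l == i); case: (k == i); rewrite /= ?mul0r ?mul1r ?mulr0 ?mulr1.
Qed.

Lemma psd_tr_ge0 n (X : 'M[C]_n) : psd X -> 0 <= \tr X.
Proof.
move=> pX; rewrite /mxtrace sumr_ge0 // => i _.
by rewrite -qf_delta psd_qf.
Qed.

Lemma loewner_tr n (X Y : 'M[C]_n) c : loewner X (rc c *: Y) -> \tr X = 1 -> \tr Y = 1 -> 1 <= c.
Proof.
move=> /psd_tr_ge0 h tX tY; move: h.
rewrite mxtraceD linearN /= mxtraceZ tX tY mulr1 subr_ge0.
by rewrite -[1 : C]/(rc 1) /rc lecR.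
Qed.

Lemma lin_facts a b (M : 'M[C]_a -> 'M[C]_b) : linear M ->
  forall c X Y, M (c *: X - Y) = c *: M X - M Y.
Proof.
move=> hM c X Y.
have M0 : M 0 = 0.
  have h := hM 1 0 0; rewrite !scale1r addr0 in h.
  by apply: (@addrI _ (M 0)); rewrite addr0 -h.
have MN : M (- Y) = - M Y.
  by have := hM (-1) Y 0; rewrite addr0 M0 addr0 !scaleN1r.
by have := hM c X (- Y); rewrite MN.
Qed.

Lemma channel_psd a b (M : 'M[C]_a -> 'M[C]_b) X : is_channel M -> psd X -> psd (M X).
Proof.
case=> _ cp _ pX; have := cp 1%N (lift X) (psd_lift pX).
by rewrite ampliate_lift => /psd_unlift.
Qed.

Lemma channel_state a b (M : 'M[C]_a -> 'M[C]_b) X : is_channel M -> is_state X -> is_state (M X).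
Proof.
move=> hM [pX tX]; split; first exact: channel_psd.
by case: hM => _ _ ->.
Qed.

Lemma channel_loewner a b (M : 'M[C]_a -> 'M[C]_b) X Y c : is_channel M ->
  loewner X (rc c *: Y) -> loewner (M X) (rc c *: M Y).
Proof.
move=> hM lXY; have := channel_psd hM lXY.
by case: (hM) => hl _ _; rewrite /loewner lin_facts.
Qed.

Lemma rcM (c d : R) : rc (c * d) = rc c * rc d.
Proof. by rewrite /rc /=; congr Complex; simpl; ring. Qed.

Lemma rc_ge0 (c : R) : 0 <= c -> 0 <= rc c.
Proof. by move=> c0; rewrite /rc -[0 : C]/(rc 0) /rc lecR. Qed.

Lemma loewner_trans_scale n (X Y Z : 'M[C]_n) (c d : R) : 0 <= c -> psd X -> psd Z ->
  loewner X (rc c *: Y) -> loewner Y (rc d *: Z) -> loewner X (rc (c * d) *: Z).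
Proof.
move=> c0 pX pZ l1 l2; apply: loewnerP (psd_herm pX) (hermitianZ _ (psd_herm pZ)) _ => v.
apply: (le_trans (loewner_qf v l1)); rewrite !qfZ rcM -mulrA ler_wpM2l ?rc_ge0 //.
by rewrite -qfZ; apply: loewner_qf.
Qed.
End S9.
Local Open Scope classical_set_scope.
Section S10.
Variable R : realType.
Local Notation C := (R[i]).
Local Notation SS X Y := [set lam : R | loewner X (rc lam *: Y)].

Lemma SS_ge1 n (X Y : 'M[C]_n) lam : is_state X -> is_state Y -> SS X Y lam -> 1 <= lam.
Proof. by case=> _ tX [_ tY] /= h; apply: loewner_tr h tX tY. Qed.

Lemma SS_inf n (X Y : 'M[C]_n) lam : is_state X -> is_state Y -> SS X Y lam ->
  1 <= inf (SS X Y) /\ inf (SS X Y) <= lam.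
Proof.
move=> sX sY hl; split.
  by apply: lb_le_inf; [exists lam | move=> l /SS_ge1; apply].
by apply: ge_inf => //; exists 1 => l /SS_ge1; apply.
Qed.

Lemma ln2_gt0 : 0 < ln (2 : R).
Proof. apply: ln_gt0; lra. Qed.

Lemma log2_ge0 (x : R) : 1 <= x -> 0 <= log2 x.
Proof. by move=> x1; rewrite /log2 divr_ge0 ?ln_ge0 //; lra. Qed.

Lemma log2_le (x y : R) : 0 < x -> x <= y -> log2 x <= log2 y.
Proof.
move=> x0 xy; rewrite /log2 ler_pM2r ?invr_gt0 ?ln2_gt0 //.
by rewrite ler_ln // posrE // (lt_le_trans x0 xy).
Qed.

Lemma log2M (x y : R) : 0 < x -> 0 < y -> log2 (x * y) = log2 x + log2 y.
Proof. by move=> x0 y0; rewrite /log2 lnM ?posrE // mulrDl. Qed.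

Lemma Dmax_ge0 n (X Y : 'M[C]_n) : is_state X -> is_state Y -> (0 <= Dmax X Y)%E.
Proof.
move=> sX sY; rewrite /Dmax; case: asboolP => _; last by rewrite leey.
rewrite lee_fin; have [S0|/set0P [l Sl]] := eqVneq (SS X Y) set0.
  by rewrite S0 inf0 /log2 ln0 // mul0r.
by apply: log2_ge0; case: (SS_inf sX sY Sl).
Qed.

Lemma DmaxE n (X Y : 'M[C]_n) : supp_sub X Y -> Dmax X Y = (log2 (inf (SS X Y)))%:E.
Proof. by rewrite /Dmax => h; case: asboolP. Qed.
End S10.
Section S11.
Variable R : realType.
Local Notation C := (R[i]).
Local Notation SS X Y := [set lam : R | loewner X (rc lam *: Y)].

Lemma Dmax_chan_ge a b (M N : 'M[C]_a -> 'M[C]_b) (X : 'M[C]_a) : is_state X ->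
  (Dmax (lift (M X)) (lift (N X)) <= Dmax_chan M N)%E.
Proof.
move=> sX; apply: ereal_sup_ubound; exists 1%N, (lift X); split; first exact: state_lift.
by rewrite !ampliate_lift.
Qed.

Lemma key_ineq a b (rho om : 'M[C]_a) (M N : 'M[C]_a -> 'M[C]_b) :
  is_state rho -> is_state om -> is_channel M -> is_channel N ->
  (Dmax (M rho) (N om) <= Dmax rho om + Dmax_chan M N)%E.
Proof.
move=> srho som hM hN.
have sMr := channel_state hM srho.
have sNo := channel_state hN som.
have sMo := channel_state hM som.
have sLMo := state_lift sMo.
have sLNo := state_lift sNo.
have chan0 : (0 <= Dmax_chan M N)%E.
  apply: le_trans (Dmax_chan_ge M N srho).
  by apply: Dmax_ge0; apply: state_lift; apply: channel_state.
have d0 : (0 <= Dmax rho om)%E by apply: Dmax_ge0.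
have [supp1|nsupp1] := asboolP (supp_sub rho om); last first.
  have -> : Dmax rho om = +oo%E by rewrite /Dmax; case: asboolP.
  rewrite addye ?leey //; by apply: contraTneq chan0 => ->.
have D2le := Dmax_chan_ge M N som.
have [supp2|nsupp2] := asboolP (supp_sub (lift (M om)) (lift (N om))); last first.
  have D2 : Dmax (lift (M om)) (lift (N om)) = +oo%E by rewrite /Dmax; case: asboolP.
  move: D2le; rewrite D2 leye_eq => /eqP ->.
  rewrite addey ?leey //; by apply: contraTneq d0 => ->.
have [l0 Sl0] := dominate (proj1 srho) (proj1 som) supp1.
have [m0 Sm0] := dominate (proj1 sLMo) (proj1 sLNo) supp2.
have S12 : forall l m, SS rho om l -> SS (lift (M om)) (lift (N om)) m ->
    SS (M rho) (N om) (l * m).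
  move=> l m Sl Sm /=; apply: loewner_trans_scale (proj1 sMr) (proj1 sNo) _ _.
  - by apply: le_trans (SS_ge1 srho som Sl); apply: ler01.
  - exact: (channel_loewner hM Sl).
  - exact: (loewner_unlift Sm).
have supp3 : supp_sub (M rho) (N om).
  have := loewner_supp (proj1 sMr) (S12 _ _ Sl0 Sm0) => h.
  by apply: submx_trans h _; apply: scalemx_sub.
rewrite (DmaxE supp1) (DmaxE supp3).
move: D2le; rewrite (DmaxE supp2) => D2le.
apply: le_trans (leeD2l _ D2le); rewrite -EFinD lee_fin.
set i1 := inf (SS rho om); set i2 := inf (SS (lift (M om)) (lift (N om))).
set i3 := inf (SS (M rho) (N om)).
have [i1ge _] := SS_inf srho som Sl0.
have [i2ge _] := SS_inf sLMo sLNo Sm0.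
have i1pos : 0 < i1 by exact: (lt_le_trans ltr01 i1ge).
have i2pos : 0 < i2 by exact: (lt_le_trans ltr01 i2ge).
have [i3ge _] := SS_inf sMr sNo (S12 _ _ Sl0 Sm0).
have i3pos : 0 < i3 by exact: (lt_le_trans ltr01 i3ge).
rewrite -log2M //; apply: log2_le => //.
have h3 : forall l m, SS rho om l -> SS (lift (M om)) (lift (N om)) m -> i3 <= l * m.
  by move=> l m Sl Sm; case: (SS_inf sMr sNo (S12 _ _ Sl Sm)).
have h4 : forall m, SS (lift (M om)) (lift (N om)) m -> i3 / m <= i1.
  move=> m Sm; have mpos : 0 < m by exact: (lt_le_trans ltr01 (SS_ge1 sLMo sLNo Sm)).
  apply: lb_le_inf; first by exists l0.
  by move=> l Sl; rewrite ler_pdivrMr // h3.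
have h5 : i3 / i1 <= i2.
  apply: lb_le_inf; first by exists m0.
  move=> m Sm; have mpos : 0 < m by exact: (lt_le_trans ltr01 (SS_ge1 sLMo sLNo Sm)).
  by rewrite ler_pdivrMr // mulrC -ler_pdivrMr // h4.
by rewrite -ler_pdivrMl // mulrC.
Qed.
End S11.
Section S12.
Variable R : realType.

Lemma inf_add_le (f : \bar R) (SA SB : set (\bar R)) :
  (forall a, SA a -> (0 <= a)%E) -> (forall b, SB b -> (0 <= b)%E) ->
  (forall a b, SA a -> SB b -> (f <= a + b)%E) ->
  (f <= ereal_inf SA + ereal_inf SB)%E.
Proof.
move=> hA hB hf.
have iA : (0 <= ereal_inf SA)%E by apply/ereal_infP.
have iB : (0 <= ereal_inf SB)%E by apply/ereal_infP.
case EA: (ereal_inf SA) iA => [x| |] // iA.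
  case EB: (ereal_inf SB) iB => [y| |] // iB; last first.
    by rewrite addey // leey.
  apply/lee_addgt0Pr => e e0.
  have e2 : 0 < e / 2 by rewrite divr_gt0 // ltr0n.
  have fA : ereal_inf SA \is a fin_num by rewrite EA.
  have fB : ereal_inf SB \is a fin_num by rewrite EB.
  have [a Sa ha] := lb_ereal_inf_adherent e2 fA; rewrite EA in ha.
  have [b Sb hb] := lb_ereal_inf_adherent e2 fB; rewrite EB in hb.
  apply: le_trans (hf a b Sa Sb) _.
  apply: le_trans (leeD (ltW ha) (ltW hb)) _.
  rewrite -!EFinD lee_fin; lra.
by rewrite addye ?leey //; apply: contraTneq iB => ->.
Qed.
End S12.

Theorem proposition1 (R : realType) (T : resource_theory R) (A B : sys T)
  (rho : 'M[R[i]]_(sdim T A)) (M : 'M[R[i]]_(sdim T A) -> 'M[R[i]]_(sdim T B)) :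
  is_state rho -> is_channel M ->
  (DmaxF_state (M rho) <= DmaxF_state rho + DmaxF_chan M)%E.
Proof.
move=> srho hM; rewrite /DmaxF_state /DmaxF_chan.
apply: inf_add_le.
- by move=> _ [om fom <-]; apply: Dmax_ge0 => //; apply: free_state_is_state _ _ _ _ fom.
- move=> _ [N fN <-]; apply: le_trans (Dmax_chan_ge M N srho).
  apply: Dmax_ge0; apply: state_lift; apply: channel_state => //.
  exact: free_channel_is_channel _ _ _ _ _ fN.
move=> _ _ [om fom <-] [N fN <-].
have sN := free_channel_is_channel _ _ _ _ _ fN.
apply: le_trans (key_ineq srho (free_state_is_state _ _ _ _ fom) hM sN).
apply: ereal_inf_lbound; exists (N om) => //.
exact: free_closed _ _ _ _ _ _ fN fom.
Qed.
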